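(* Let $k\ge2$, $d>0$ with $2d/k\le1$, and $t\ge1$. Let $T$ be a Galton–Watson tree of depth $t$ rooted at $u$ with $\mathrm{Poisson}(d)$ offspring distribution, let $R$ be the set of vertices of $T$ at depth $t$, and, independently of $T$, assign i.i.d. uniform labels $X_v\in[k]$ to the vertices of $T$; for every edge $(i,j)$ of $T$ let $Y_{ij}=\mathbf 1\{X_i=X_j\}$. Let $P^{(t)}_x$ denote the joint law of $(T,X_R,\{Y_e\}_{e\in E(T)})$ conditioned on $X_u=x$. Then $$\max_{x,x'\in[k]}d_{\mathrm{TV}}\bigl(P^{(t)}_x,P^{(t)}_{x'}\bigr)\to0\qquad\text{as }t\to\infty.$$
   Context: $d_{\mathrm{TV}}$ denotes total variation distance; $[k]=\{1,\dots,k\}$. *)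

(* Defs.v *)
From Stdlib Require Import Reals Lra Lia List Arith.
Import ListNotations.
Open Scope R_scope.

Inductive tree : Type := Node : list tree -> tree.

(* Probability that a Galton-Watson tree with Poisson(d) offspring,
   truncated at depth t (vertices at depth t get no children), equals tau.
   Zero for trees that are not truncated at depth t. *)
Fixpoint gw_prob (d : R) (t : nat) (tau : tree) : R :=
  match t, tau with
  | O, Node nil => 1
  | O, Node (_ :: _) => 0
  | S n, Node cs =>
      (exp (- d) * d ^ (length cs) / INR (fact (length cs)))
      * fold_right Rmult 1 (map (gw_prob d n) cs)
  end.

(* Observation attached to a tree: at a vertex at depth t we observe its
   label (OLeaf x, the X_R part); at a vertex of depth < t we observe, for each
   child edge (in order), the indicator Y_e together with the observation of
   the child's subtree. *)
Inductive obs : Type :=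
| OLeaf : nat -> obs
| ONode : list (bool * obs) -> obs.

Definition sum_labels (k : nat) (f : nat -> R) : R :=
  fold_right Rplus 0 (map f (seq 1 k)).

(* Conditional probability of observation o given tree tau (depth t) and
   root label x, when labels of non-root vertices are i.i.d. uniform on [k]. *)
Fixpoint lik (k t : nat) (tau : tree) (x : nat) (o : obs) : R :=
  match t with
  | O => match tau, o with
         | Node nil, OLeaf y => if Nat.eqb x y then 1 else 0
         | _, _ => 0
         end
  | S n => match tau, o with
           | Node cs, ONode ys =>
               if Nat.eqb (length cs) (length ys) then
                 fold_right Rmult 1
                   (map (fun p : tree * (bool * obs) =>
                           let '(c, (b, oc)) := p in
                           sum_labels k (fun z =>
                             / INR k
                             * (if Bool.eqb b (Nat.eqb z x) then 1 else 0)
                             * lik k n c z oc))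
                        (combine cs ys))
               else 0
           | _, _ => 0
           end
  end.

(* P^{(t)}_x : joint law of (T, X_R, (Y_e)_e) given X_u = x, as a
   probability mass function on the countable space tree * obs. *)
Definition P_law (d : R) (k t x : nat) (w : tree * obs) : R :=
  gw_prob d t (fst w) * lik k t (fst w) x (snd w).

(* d_TV(P,Q) <= eps for pmfs on a countable space:
   d_TV = 1/2 sum_w |P w - Q w|, the sum being the sup of finite partial sums. *)
Definition dTV_le {A : Type} (P Q : A -> R) (eps : R) : Prop :=
  forall l : list A, NoDup l ->
    / 2 * fold_right Rplus 0 (map (fun w => Rabs (P w - Q w)) l) <= eps.

(* Main.v *)
Require Import Defs.
From Stdlib Require Import Reals List Arith.
From Stdlib Require Import Lra Lia.
Import ListNotations.
Open Scope R_scope.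

Definition sumR {A} (f : A -> R) (l : list A) := fold_right Rplus 0 (map f l).
Definition prodR {A} (f : A -> R) (l : list A) := fold_right Rmult 1 (map f l).

Lemma sumR_app {A} (f : A -> R) l1 l2 : sumR f (l1 ++ l2) = sumR f l1 + sumR f l2.
Proof. induction l1; simpl; unfold sumR in *; simpl; [lra|rewrite IHl1; lra]. Qed.

Lemma sumR_map {A B} (f : B -> R) (g : A -> B) l : sumR f (map g l) = sumR (fun x => f (g x)) l.
Proof. unfold sumR; rewrite map_map; reflexivity. Qed.

Lemma sumR_flat_map {A B} (f : B -> R) (g : A -> list B) l :
  sumR f (flat_map g l) = sumR (fun x => sumR f (g x)) l.
Proof. induction l; simpl; [reflexivity|]. rewrite sumR_app, IHl. reflexivity. Qed.

Lemma sumR_ext_in {A} (f g : A -> R) l : (forall x, In x l -> f x = g x) -> sumR f l = sumR g l.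
Proof. induction l; intros H; simpl; [reflexivity|]. unfold sumR in *; simpl.
  rewrite H by (left; auto). rewrite IHl; auto. intros; apply H; right; auto. Qed.

Lemma sumR_le_in {A} (f g : A -> R) l : (forall x, In x l -> f x <= g x) -> sumR f l <= sumR g l.
Proof. induction l; intros H; unfold sumR in *; simpl; [lra|].
  assert (f a <= g a) by (apply H; left; auto).
  assert (fold_right Rplus 0 (map f l) <= fold_right Rplus 0 (map g l)) by (apply IHl; intros; apply H; right; auto).
  lra. Qed.

Lemma sumR_nonneg {A} (f : A -> R) l : (forall x, In x l -> 0 <= f x) -> 0 <= sumR f l.
Proof. induction l; intros H; unfold sumR in *; simpl; [lra|].
  assert (0 <= f a) by (apply H; left; auto).
  assert (0 <= fold_right Rplus 0 (map f l)) by (apply IHl; intros; apply H; right; auto). lra. Qed.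

Lemma sumR_plus {A} (f g : A -> R) l : sumR (fun x => f x + g x) l = sumR f l + sumR g l.
Proof. induction l; unfold sumR in *; simpl; [lra|]. rewrite IHl; lra. Qed.

Lemma sumR_scal {A} (c : R) (f : A -> R) l : sumR (fun x => c * f x) l = c * sumR f l.
Proof. induction l; unfold sumR in *; simpl; [lra|]. rewrite IHl; lra. Qed.

Lemma sumR_swap {A B} (f : A -> B -> R) l1 l2 :
  sumR (fun x => sumR (fun y => f x y) l2) l1 = sumR (fun y => sumR (fun x => f x y) l1) l2.
Proof. induction l1; simpl.
  - unfold sumR; simpl. induction l2; simpl; auto. rewrite <- IHl2; lra.
  - change (sumR (fun y => f a y) l2 + sumR (fun x => sumR (fun y => f x y) l2) l1 =
            sumR (fun y => f a y + sumR (fun x => f x y) l1) l2).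
    rewrite sumR_plus, IHl1. reflexivity. Qed.

Lemma sumR_const {A} (c : R) (l : list A) : sumR (fun _ => c) l = INR (length l) * c.
Proof. induction l; unfold sumR in *; [simpl; lra|].
  change (length (a :: l)) with (S (length l)). rewrite S_INR. simpl. rewrite IHl; lra. Qed.

Lemma sumR_nonzero {A} (f : A -> R) l : sumR f l <> 0 -> exists x, In x l /\ f x <> 0.
Proof. induction l; unfold sumR; simpl; intros H; [lra|].
  destruct (Req_dec (f a) 0) as [E|E].
  - destruct IHl as [x [H1 H2]]. unfold sumR; intros E2; apply H; rewrite E, E2; lra.
    exists x; auto.
  - exists a; auto. Qed.

Lemma prodR_mult {A} (f g : A -> R) l : prodR (fun x => f x * g x) l = prodR f l * prodR g l.
Proof. induction l; unfold prodR in *; simpl; [lra|]. rewrite IHl; ring. Qed.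

Lemma prodR_mono {A} (f g : A -> R) l : (forall x, In x l -> 0 <= f x <= g x) ->
  0 <= prodR f l <= prodR g l.
Proof. induction l; intros H; unfold prodR in *; simpl; [lra|].
  destruct (H a (or_introl eq_refl)) as [Ha1 Ha2].
  destruct IHl as [H1 H2]. intros; apply H; right; auto.
  split. apply Rmult_le_pos; lra. apply Rmult_le_compat; lra. Qed.

Lemma prodR_nonzero {A} (f : A -> R) l : prodR f l <> 0 -> forall x, In x l -> f x <> 0.
Proof. induction l; unfold prodR; simpl; intros H x Hx; [tauto|].
  destruct Hx as [<-|Hx]. intros E; apply H; rewrite E; lra.
  apply IHl; auto. unfold prodR; intros E; apply H; rewrite E; lra. Qed.

Fixpoint tuples {A} (m : nat) (P : list A) : list (list A) :=
  match m with
  | O => [[]]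
  | S m => flat_map (fun p => map (cons p) (tuples m P)) P
  end.

Lemma sum_tuples {A} (phi : A -> R) P m :
  sumR (prodR phi) (tuples m P) = (sumR phi P) ^ m.
Proof. induction m; simpl.
  - unfold sumR, prodR; simpl; lra.
  - rewrite sumR_flat_map.
    rewrite (sumR_ext_in _ (fun p => phi p * sumR (prodR phi) (tuples m P))).
    + rewrite IHm. rewrite (sumR_ext_in _ (fun p => (sumR phi P)^m * phi p)).
      rewrite sumR_scal; ring. intros; ring.
    + intros p _. rewrite sumR_map. rewrite <- sumR_scal. reflexivity. Qed.

Lemma tuples_length {A} (P : list A) m ts : In ts (tuples m P) -> length ts = m.
Proof. revert ts; induction m; simpl; intros ts H.
  - destruct H as [<-|[]]; auto.
  - apply in_flat_map in H. destruct H as [p [_ H]]. apply in_map_iff in H.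
    destruct H as [ts' [<- H]]. simpl; f_equal; auto. Qed.

Lemma In_tuples {A} (P : list A) ts : (forall x, In x ts -> In x P) -> In ts (tuples (length ts) P).
Proof. induction ts; simpl; intros H; auto.
  apply in_flat_map. exists a; split; auto. apply in_map; auto. Qed.

Lemma sumR_sub {A} (g : A -> R) (l U : list A) :
  NoDup l -> (forall w, In w l -> g w <> 0 -> In w U) -> (forall w, 0 <= g w) ->
  sumR g l <= sumR g U.
Proof. revert U; induction l as [|a l IH]; intros U Hnd Hin Hpos.
  - unfold sumR; simpl. apply sumR_nonneg; auto.
  - inversion Hnd; subst.
    change (g a + sumR g l <= sumR g U).
    destruct (Req_dec (g a) 0) as [E|E].
    + rewrite E. assert (sumR g l <= sumR g U); [|lra]. apply IH; auto.
      intros; apply Hin; auto. right; auto.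
    + assert (Ha : In a U) by (apply Hin; auto; left; auto).
      apply in_split in Ha. destruct Ha as [U1 [U2 ->]].
      assert (sumR g l <= sumR g (U1 ++ U2)).
      { apply IH; auto. intros w Hw Hg. assert (In w (U1 ++ a :: U2)) by (apply Hin; auto; right; auto).
        apply in_app_iff in H. apply in_app_iff. destruct H as [H|[H|H]]; auto.
        subst; contradiction. }
      rewrite sumR_app in *. change (sumR g (a :: U2)) with (g a + sumR g U2). lra. Qed.

Lemma sumR_seq (f : nat -> R) M : sumR f (seq 0 (S M)) = sum_f_R0 f M.
Proof. induction M. unfold sumR; simpl; lra.
  rewrite seq_S, sumR_app, IHM. simpl. unfold sumR; simpl. lra. Qed.

Lemma series_le (u : nat -> R) l N : (forall m, 0 <= u m) -> Un_cv (fun n => sum_f_R0 u n) l ->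
  sum_f_R0 u N <= l.
Proof. intros H1 H2. apply (growing_ineq (fun n => sum_f_R0 u n)); auto.
  intros n; simpl. specialize (H1 (S n)); lra. Qed.

Lemma exp_cv y : Un_cv (fun n => sum_f_R0 (fun i => / INR (fact i) * y ^ i) n) (exp y).
Proof. unfold exp. destruct (exist_exp y) as [l H]. simpl. exact H. Qed.

Lemma exp_partial y N : 0 <= y -> sum_f_R0 (fun i => / INR (fact i) * y ^ i) N <= exp y.
Proof. intros Hy. apply series_le. intros m. apply Rmult_le_pos.
  left; apply Rinv_0_lt_compat, lt_0_INR, lt_O_fact. apply pow_le; auto. apply exp_cv. Qed.

Lemma exp_partial_diff y1 y2 N : 0 <= y2 <= y1 ->
  sum_f_R0 (fun i => / INR (fact i) * y1 ^ i - / INR (fact i) * y2 ^ i) N <= exp y1 - exp y2.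
Proof. intros Hy. apply series_le.
  - intros m. assert (0 < / INR (fact m)) by (apply Rinv_0_lt_compat, lt_0_INR, lt_O_fact).
    assert (y2 ^ m <= y1 ^ m) by (apply pow_incr; lra). nra.
  - intros eps Heps. destruct (CV_minus _ _ _ _ (exp_cv y1) (exp_cv y2) eps Heps) as [N0 HN].
    exists N0; intros n Hn. rewrite minus_sum. apply HN; auto. Qed.

Fixpoint tsize (t : tree) : nat := match t with Node cs => S (list_sum (map tsize cs)) end.

Definition mk (ts : list (bool * (tree * obs))) : tree * obs :=
  (Node (map (fun p => fst (snd p)) ts), ONode (map (fun p => (fst p, snd (snd p))) ts)).
Definition E (U : list (tree*obs)) : list (bool * (tree*obs)) :=
  map (fun w => (true,w)) U ++ map (fun w => (false,w)) U.
Fixpoint Ul (k t M : nat) : list (tree * obs) :=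
  match t with
  | O => map (fun y => (Node [], OLeaf y)) (seq 1 k)
  | S n => flat_map (fun m => map mk (tuples m (E (Ul k n M)))) (seq 0 (S M))
  end.
Definition Fe k n a c b oc := sum_labels k (fun z => / INR k * (if Bool.eqb b (Nat.eqb z a) then 1 else 0) * lik k n c z oc).
Definition pois d m := exp (- d) * d ^ m / INR (fact m).

Lemma prodR_nonneg {A} (f : A -> R) l : (forall x, In x l -> 0 <= f x) -> 0 <= prodR f l.
Proof. intros H. apply (prodR_mono f f l). intros; specialize (H x H0); lra. Qed.

Lemma invk_nonneg k : 0 <= / INR k.
Proof. destruct k. simpl. rewrite Rinv_0. lra. left; apply Rinv_0_lt_compat, lt_0_INR; lia. Qed.

Lemma lik_nonneg k t : forall tau a o, 0 <= lik k t tau a o.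
Proof. induction t; intros [cs] a o.
  - destruct cs, o; simpl; try lra. destruct Nat.eqb; lra.
  - destruct o as [y|ys]; simpl; [lra|]. destruct Nat.eqb; [|lra].
    apply prodR_nonneg. intros [c [b oc]] _. apply sumR_nonneg. intros z _.
    apply Rmult_le_pos; [apply Rmult_le_pos|]; auto using invk_nonneg.
    destruct Bool.eqb; lra. Qed.

Lemma pois_nonneg d m : 0 <= d -> 0 <= pois d m.
Proof. intros. unfold pois, Rdiv. apply Rmult_le_pos; [apply Rmult_le_pos|].
  left; apply exp_pos. apply pow_le; auto. left; apply Rinv_0_lt_compat, lt_0_INR, lt_O_fact. Qed.

Lemma gw_nonneg d t : 0 <= d -> forall tau, 0 <= gw_prob d t tau.
Proof. intros Hd. induction t; intros [cs].
  - destruct cs; simpl; lra.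
  - simpl. apply Rmult_le_pos. apply (pois_nonneg d (length cs) Hd). apply prodR_nonneg; auto. Qed.

Lemma Fe_nonneg k n a c b oc : 0 <= Fe k n a c b oc.
Proof. apply sumR_nonneg. intros z _. apply Rmult_le_pos; [apply Rmult_le_pos|]; auto using invk_nonneg, lik_nonneg.
  destruct Bool.eqb; lra. Qed.

Lemma delta_zero (g : nat -> R) a l : ~ In a l -> sumR (fun z => if Nat.eqb z a then g z else 0) l = 0.
Proof. induction l; intros H; unfold sumR in *; simpl; [lra|].
  destruct (Nat.eqb_spec a0 a). subst; exfalso; apply H; left; auto.
  rewrite IHl. lra. intros Hl; apply H; right; auto. Qed.

Lemma delta_gen (g : nat -> R) a l : NoDup l -> In a l -> sumR (fun z => if Nat.eqb z a then g z else 0) l = g a.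
Proof. induction l; intros Hn H; [destruct H|]. inversion Hn; subst.
  change ((if Nat.eqb a0 a then g a0 else 0) + sumR (fun z => if Nat.eqb z a then g z else 0) l = g a).
  destruct (Nat.eqb_spec a0 a).
  - subst. rewrite delta_zero; auto. lra.
  - destruct H as [H|H]; [congruence|]. rewrite IHl; auto. lra. Qed.

Lemma Fe_true k n a c oc : (1 <= a <= k)%nat -> Fe k n a c true oc = / INR k * lik k n c a oc.
Proof. intros Ha. unfold Fe, sum_labels. change (sumR (fun z => / INR k * (if Bool.eqb true (z =? a)%nat then 1 else 0) * lik k n c z oc) (seq 1 k) = / INR k * lik k n c a oc).
  rewrite (sumR_ext_in _ (fun z => / INR k * (if Nat.eqb z a then lik k n c z oc else 0))).
  rewrite sumR_scal, delta_gen; auto. apply seq_NoDup. apply in_seq; lia.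
  intros z _. destruct (z =? a)%nat; simpl; ring. Qed.

Lemma Fe_tf k n a c oc : Fe k n a c true oc + Fe k n a c false oc = / INR k * sumR (fun z => lik k n c z oc) (seq 1 k).
Proof. unfold Fe, sum_labels. change (sumR (fun z => / INR k * (if Bool.eqb true (z =? a)%nat then 1 else 0) * lik k n c z oc) (seq 1 k) + sumR (fun z => / INR k * (if Bool.eqb false (z =? a)%nat then 1 else 0) * lik k n c z oc) (seq 1 k) = / INR k * sumR (fun z => lik k n c z oc) (seq 1 k)).
  rewrite <- sumR_plus, <- sumR_scal. apply sumR_ext_in. intros z _. destruct (z =? a)%nat; simpl; ring. Qed.

Lemma combine_map {A B C} (f : A -> B) (g : A -> C) l : combine (map f l) (map g l) = map (fun x => (f x, g x)) l.
Proof. induction l; simpl; f_equal; auto. Qed.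

Lemma gw_mk d n ts : gw_prob d (S n) (fst (mk ts)) = pois d (length ts) * prodR (fun p => gw_prob d n (fst (snd p))) ts.
Proof. unfold mk; simpl fst. simpl gw_prob. rewrite length_map. unfold pois, prodR. rewrite map_map. reflexivity. Qed.

Lemma lik_mk k n a ts : lik k (S n) (fst (mk ts)) a (snd (mk ts)) = prodR (fun p => Fe k n a (fst (snd p)) (fst p) (snd (snd p))) ts.
Proof. unfold mk; simpl fst; simpl snd. simpl lik. rewrite !length_map, Nat.eqb_refl.
  rewrite combine_map. unfold prodR. rewrite map_map. reflexivity. Qed.

Lemma list_sum_len cs : (length cs <= list_sum (map tsize cs))%nat.
Proof. induction cs as [|[c] cs IH]; simpl; lia. Qed.

Lemma tsize_in c cs : In c cs -> (tsize c <= list_sum (map tsize cs))%nat.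
Proof. induction cs; simpl; intros H; [destruct H|]. destruct H as [H|H]; [subst; lia|]. specialize (IHcs H); lia. Qed.

Definition sw (p : tree * (bool * obs)) : bool * (tree * obs) := (fst (snd p), (fst p, snd (snd p))).

Lemma mk_combine cs ys : length cs = length ys -> mk (map sw (combine cs ys)) = (Node cs, ONode ys).
Proof. unfold mk. rewrite !map_map. revert ys; induction cs; intros [|y ys] H; simpl in *; try lia; auto.
  injection H as H. specialize (IHcs ys H). injection IHcs as H1 H2. rewrite H1, H2.
  destruct y; reflexivity. Qed.

Lemma mem_U k t : forall M tau o a, (1 <= a <= k)%nat -> lik k t tau a o <> 0 -> (tsize tau <= M)%nat ->
  In (tau, o) (Ul k t M).
Proof. induction t; intros M [cs] o a Ha H Hs.
  - destruct cs; [|simpl in H; lra]. destruct o as [y|ys]; [|simpl in H; lra].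
    simpl in H. destruct (Nat.eqb_spec a y); [subst|lra].
    simpl Ul. apply (in_map (fun y => (Node [], OLeaf y))). apply in_seq; lia.
  - destruct o as [y|ys]; [simpl in H; lra|].
    cbn [lik] in H. destruct (Nat.eqb_spec (length cs) (length ys)) as [Hl|]; [|lra].
    cbn [Ul]. apply in_flat_map. exists (length cs). split.
    + apply in_seq. simpl in Hs. pose proof (list_sum_len cs). lia.
    + rewrite <- (mk_combine cs ys Hl). apply in_map.
      replace (length cs) with (length (map sw (combine cs ys))).
      2:{ rewrite length_map, length_combine. lia. }
      apply In_tuples. intros x Hx. apply in_map_iff in Hx. destruct Hx as [[c [b oc]] [<- Hp]].
      pose proof (prodR_nonzero _ _ H _ Hp) as H2. cbv beta iota in H2.
      apply sumR_nonzero in H2. destruct H2 as [z [Hz H3]].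
      assert (Hl2 : lik k t c z oc <> 0). { intros E0; apply H3; rewrite E0; ring. }
      apply in_seq in Hz.
      assert (In (c, oc) (Ul k t M)).
      { apply (IHt M c oc z); auto; try lia. apply in_combine_l in Hp. apply tsize_in in Hp. simpl in Hs. lia. }
      unfold E, sw; simpl. apply in_app_iff. destruct b; [left|right]; apply in_map; auto. Qed.

Definition phiA k d n a (p : bool*(tree*obs)) := gw_prob d n (fst (snd p)) * Fe k n a (fst (snd p)) (fst p) (snd (snd p)).

Lemma sumR_E f U : sumR f (E U) = sumR (fun w => f (true,w) + f (false,w)) U.
Proof. unfold E. rewrite sumR_app, !sumR_map, sumR_plus. reflexivity. Qed.

Lemma sumR_minus {A} (f g : A -> R) l : sumR (fun x => f x - g x) l = sumR f l - sumR g l.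
Proof. induction l; unfold sumR in *; simpl; [lra|]. rewrite IHl; lra. Qed.

Lemma A_le k d n M a : (1 <= k)%nat -> 0 <= d -> (1 <= a <= k)%nat ->
  (forall z, (1 <= z <= k)%nat -> sumR (fun w => gw_prob d n (fst w) * lik k n (fst w) z (snd w)) (Ul k n M) <= 1) ->
  0 <= sumR (phiA k d n a) (E (Ul k n M)) <= 1.
Proof. intros Hk Hd Ha IH. split.
  - apply sumR_nonneg. intros; unfold phiA; apply Rmult_le_pos; auto using gw_nonneg, Fe_nonneg.
  - rewrite sumR_E.
    rewrite (sumR_ext_in _ (fun w => / INR k * sumR (fun z => gw_prob d n (fst w) * lik k n (fst w) z (snd w)) (seq 1 k))).
    2:{ intros w _. unfold phiA; simpl. rewrite <- Rmult_plus_distr_l, Fe_tf, sumR_scal. ring. }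
    rewrite sumR_scal, sumR_swap.
    apply Rle_trans with (/ INR k * sumR (fun _ => 1) (seq 1 k)).
    + apply Rmult_le_compat_l. apply invk_nonneg. apply sumR_le_in. intros z Hz. apply IH. apply in_seq in Hz; lia.
    + rewrite sumR_const, length_seq. right. field. apply not_0_INR; lia. Qed.

Lemma term_mk k d n a ts : gw_prob d (S n) (fst (mk ts)) * lik k (S n) (fst (mk ts)) a (snd (mk ts)) =
  pois d (length ts) * prodR (phiA k d n a) ts.
Proof. rewrite gw_mk, lik_mk. unfold phiA. rewrite prodR_mult. ring. Qed.

Lemma pois_sum d M : 0 <= d -> sumR (pois d) (seq 0 (S M)) <= 1.
Proof. intros Hd. rewrite (sumR_ext_in _ (fun m => exp (-d) * (/ INR (fact m) * d ^ m))).
  2:{ intros; unfold pois, Rdiv; ring. }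
  rewrite sumR_scal, sumR_seq.
  apply Rle_trans with (exp (-d) * exp d).
  apply Rmult_le_compat_l. left; apply exp_pos. apply exp_partial; auto.
  rewrite <- exp_plus. replace (-d + d) with 0 by ring. rewrite exp_0; lra. Qed.

Lemma pois_sum2 d M s : 0 <= d -> 0 <= s <= 1 ->
  sumR (fun m => pois d m * (1 - (1 - s) ^ m)) (seq 0 (S M)) <= 1 - exp (- (d * s)).
Proof. intros Hd Hs.
  rewrite (sumR_ext_in _ (fun m => exp (-d) * (/ INR (fact m) * d ^ m - / INR (fact m) * (d * (1 - s)) ^ m))).
  2:{ intros; rewrite Rpow_mult_distr; unfold pois, Rdiv; ring. }
  rewrite sumR_scal, sumR_seq.
  apply Rle_trans with (exp (-d) * (exp d - exp (d * (1 - s)))).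
  apply Rmult_le_compat_l. left; apply exp_pos. apply exp_partial_diff. nra.
  rewrite Rmult_minus_distr_l, <- !exp_plus. replace (-d + d) with 0 by ring.
  replace (-d + d * (1 - s)) with (- (d * s)) by ring. rewrite exp_0; lra. Qed.

Lemma pow1_le A m : 0 <= A <= 1 -> A ^ m <= 1.
Proof. intros. rewrite <- (pow1 m). apply pow_incr; lra. Qed.

Lemma norm k d : (1 <= k)%nat -> 0 <= d -> forall n M a, (1 <= a <= k)%nat ->
  sumR (fun w => gw_prob d n (fst w) * lik k n (fst w) a (snd w)) (Ul k n M) <= 1.
Proof. intros Hk Hd n. induction n; intros M a Ha.
  - cbn [Ul]. rewrite sumR_map.
    rewrite (sumR_ext_in _ (fun y => if Nat.eqb y a then (fun _ => 1) y else 0)).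
    rewrite delta_gen. lra. apply seq_NoDup. apply in_seq; lia.
    intros y _. simpl. rewrite Nat.eqb_sym. destruct (a =? y)%nat; lra.
  - cbn [Ul]. rewrite sumR_flat_map.
    apply Rle_trans with (sumR (pois d) (seq 0 (S M))); [|apply pois_sum; auto].
    apply sumR_le_in. intros m _. rewrite sumR_map.
    rewrite (sumR_ext_in _ (fun ts => pois d m * prodR (phiA k d n a) ts)).
    2:{ intros ts Hts. rewrite term_mk. rewrite (tuples_length _ _ _ Hts). reflexivity. }
    rewrite sumR_scal, sum_tuples.
    pose proof (A_le k d n M a Hk Hd Ha (fun z Hz => IHn M z Hz)).
    pose proof (pow1_le _ m H). pose proof (pois_nonneg d m Hd).
    rewrite <- (Rmult_1_r (pois d m)) at 2. apply Rmult_le_compat_l; lra. Qed.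

Fixpoint qs (k : nat) (d : R) (n : nat) : R :=
  match n with O => 1 | S n => 1 - exp (- (d * (2 * qs k d n / INR k))) end.

Lemma exp_neg_le1 x : 0 <= x -> exp (- x) <= 1.
Proof. intros H. destruct H as [H|H]. left. rewrite <- exp_0. apply exp_increasing. lra.
  subst. rewrite Ropp_0, exp_0. lra. Qed.

Lemma qs_bounds k d n : (2 <= k)%nat -> 0 <= d -> 0 <= qs k d n <= 1.
Proof. intros Hk Hd. induction n; simpl; [lra|].
  assert (0 < INR k) by (apply lt_0_INR; lia).
  assert (0 <= d * (2 * qs k d n / INR k)).
  { apply Rmult_le_pos; auto. unfold Rdiv. apply Rmult_le_pos. lra. left; apply Rinv_0_lt_compat; lra. }
  pose proof (exp_neg_le1 _ H0). pose proof (exp_pos (- (d * (2 * qs k d n / INR k)))). lra. Qed.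

Lemma rmax_le u v : 0 <= u -> 0 <= v -> Rmax 0 (u - v) <= u.
Proof. intros; unfold Rmax; destruct Rle_dec; lra. Qed.

Lemma rmin_facts u v : 0 <= u -> 0 <= v -> 0 <= u - Rmax 0 (u - v) <= u /\ u - Rmax 0 (u - v) <= v.
Proof. intros; unfold Rmax; destruct Rle_dec; lra. Qed.

Lemma rmax_scal c x : 0 <= c -> Rmax 0 (c * x) = c * Rmax 0 x.
Proof. intros Hc. unfold Rmax. destruct (Rle_dec 0 (c*x)), (Rle_dec 0 x); try nra. Qed.

Lemma pow_diff A B s m : 0 <= B -> B <= A -> A <= 1 -> B <= s -> s <= 1 ->
  A ^ m - (A - B) ^ m <= 1 - (1 - s) ^ m.
Proof. intros. apply Rle_trans with (1 - (1 - B) ^ m).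
  2:{ assert ((1 - s) ^ m <= (1 - B) ^ m) by (apply pow_incr; lra). lra. }
  induction m; simpl; [lra|].
  assert (Y1 : (A - B) ^ m <= (1 - B) ^ m) by (apply pow_incr; lra).
  assert (Y2 : (A - B) ^ m <= A ^ m) by (apply pow_incr; lra).
  assert (Y0 : 0 <= (A - B) ^ m) by (apply pow_le; lra).
  assert (0 <= (1 - A) * (A ^ m - (A - B) ^ m)) by (apply Rmult_le_pos; lra).
  assert (0 <= B * ((1 - B) ^ m - (A - B) ^ m)) by (apply Rmult_le_pos; lra).
  nra. Qed.

Lemma bad k d : (2 <= k)%nat -> 0 <= d -> forall n M a b, (1 <= a <= k)%nat -> (1 <= b <= k)%nat ->
  sumR (fun w => gw_prob d n (fst w) * Rmax 0 (lik k n (fst w) a (snd w) - lik k n (fst w) b (snd w))) (Ul k n M) <= qs k d n.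
Proof. intros Hk Hd n. induction n; intros M a b Ha Hb.
  - simpl qs. apply Rle_trans with (sumR (fun w => gw_prob d 0 (fst w) * lik k 0 (fst w) a (snd w)) (Ul k 0 M)).
    + apply sumR_le_in. intros w _. apply Rmult_le_compat_l. apply gw_nonneg; auto. apply rmax_le; apply lik_nonneg.
    + apply norm; auto; lia.
  - set (s := 2 * qs k d n / INR k).
    assert (HkR : 2 <= INR k) by (replace 2 with (INR 2) by (simpl; lra); apply le_INR; auto).
    pose proof (qs_bounds k d n Hk Hd) as Hq.
    assert (Hs : 0 <= s <= 1).
    { unfold s. split. unfold Rdiv; apply Rmult_le_pos; [lra|left; apply Rinv_0_lt_compat; lra].
      apply Rmult_le_reg_r with (INR k); [lra|]. unfold Rdiv. rewrite Rmult_assoc, Rinv_l by lra. nra. }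
    cbn [qs]. fold s.
    eapply Rle_trans; [|apply (pois_sum2 d M s Hd Hs)].
    cbn [Ul]. rewrite sumR_flat_map. apply sumR_le_in. intros m _. rewrite sumR_map.
    set (psi := fun p : bool * (tree * obs) => gw_prob d n (fst (snd p)) *
       (Fe k n a (fst (snd p)) (fst p) (snd (snd p)) - Rmax 0 (Fe k n a (fst (snd p)) (fst p) (snd (snd p)) - Fe k n b (fst (snd p)) (fst p) (snd (snd p))))).
    apply Rle_trans with (sumR (fun ts => pois d m * (prodR (phiA k d n a) ts - prodR psi ts)) (tuples m (E (Ul k n M)))).
    { apply sumR_le_in. intros ts Hts. rewrite <- (tuples_length _ _ _ Hts).
      rewrite gw_mk, !lik_mk.
      unfold phiA, psi. rewrite !prodR_mult.
      set (Fa := fun p : bool * (tree * obs) => Fe k n a (fst (snd p)) (fst p) (snd (snd p))).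
      set (Fb := fun p : bool * (tree * obs) => Fe k n b (fst (snd p)) (fst p) (snd (snd p))).
      set (G := prodR (fun p : bool * (tree * obs) => gw_prob d n (fst (snd p))) ts).
      change (pois d (length ts) * G * Rmax 0 (prodR Fa ts - prodR Fb ts) <=
              pois d (length ts) * (G * prodR Fa ts - G * prodR (fun p => Fa p - Rmax 0 (Fa p - Fb p)) ts)).
      assert (H1 : 0 <= prodR (fun p => Fa p - Rmax 0 (Fa p - Fb p)) ts <= prodR Fa ts).
      { apply prodR_mono. intros p _. apply rmin_facts; unfold Fa, Fb; apply Fe_nonneg. }
      assert (H2 : 0 <= prodR (fun p => Fa p - Rmax 0 (Fa p - Fb p)) ts <= prodR Fb ts).
      { apply prodR_mono. intros p _. assert (0 <= Fa p) by apply Fe_nonneg. assert (0 <= Fb p) by apply Fe_nonneg.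
        pose proof (rmin_facts _ _ H H0). lra. }
      assert (H3 : 0 <= G). { apply prodR_nonneg. intros; apply gw_nonneg; auto. }
      assert (H4 : 0 <= pois d (length ts)) by (apply pois_nonneg; auto).
      assert (Rmax 0 (prodR Fa ts - prodR Fb ts) <= prodR Fa ts - prodR (fun p => Fa p - Rmax 0 (Fa p - Fb p)) ts).
      { apply Rmax_lub; lra. }
      rewrite Rmult_assoc. apply Rmult_le_compat_l; auto.
      rewrite <- Rmult_minus_distr_l. apply Rmult_le_compat_l; auto. }
    rewrite sumR_scal, sumR_minus, !sum_tuples.
    set (A := sumR (phiA k d n a) (E (Ul k n M))).
    set (Bf := fun p : bool * (tree * obs) => gw_prob d n (fst (snd p)) *
       Rmax 0 (Fe k n a (fst (snd p)) (fst p) (snd (snd p)) - Fe k n b (fst (snd p)) (fst p) (snd (snd p)))).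
    assert (HpsiE : sumR psi (E (Ul k n M)) = A - sumR Bf (E (Ul k n M))).
    { unfold A. rewrite <- sumR_minus. apply sumR_ext_in. intros; unfold psi, phiA, Bf; ring. }
    rewrite HpsiE.
    assert (HA : 0 <= A <= 1).
    { apply A_le; auto; try lia. intros z Hz; apply norm; auto; lia. }
    assert (HB0 : 0 <= sumR Bf (E (Ul k n M))).
    { apply sumR_nonneg. intros; unfold Bf; apply Rmult_le_pos. apply gw_nonneg; auto. apply Rmax_l. }
    assert (HBA : sumR Bf (E (Ul k n M)) <= A).
    { apply sumR_le_in. intros p _. unfold Bf, phiA. apply Rmult_le_compat_l. apply gw_nonneg; auto.
      apply rmax_le; apply Fe_nonneg. }
    assert (HBs : sumR Bf (E (Ul k n M)) <= s).
    { rewrite sumR_E.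
      rewrite (sumR_ext_in _ (fun w => / INR k * (gw_prob d n (fst w) * Rmax 0 (lik k n (fst w) a (snd w) - lik k n (fst w) b (snd w))
                   + gw_prob d n (fst w) * Rmax 0 (lik k n (fst w) b (snd w) - lik k n (fst w) a (snd w))))).
      2:{ intros w _. unfold Bf; simpl.
          pose proof (Fe_tf k n a (fst w) (snd w)). pose proof (Fe_tf k n b (fst w) (snd w)).
          assert (Fe k n a (fst w) false (snd w) - Fe k n b (fst w) false (snd w) =
                  / INR k * (lik k n (fst w) b (snd w) - lik k n (fst w) a (snd w))).
          { rewrite !Fe_true in *; auto. lra. }
          rewrite H1, !Fe_true by auto. rewrite <- Rmult_minus_distr_l, !rmax_scal by apply invk_nonneg. ring. }
      rewrite sumR_scal, sumR_plus.
      pose proof (IHn M a b Ha Hb). pose proof (IHn M b a Hb Ha).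
      unfold s. unfold Rdiv. rewrite (Rmult_comm (2 * qs k d n)). apply Rmult_le_compat_l. apply invk_nonneg. lra. }
    pose proof (pow_diff A (sumR Bf (E (Ul k n M))) s m HB0 HBA (proj2 HA) HBs (proj2 Hs)).
    apply Rmult_le_compat_l. apply pois_nonneg; auto. exact H. Qed.

Lemma qs_step k d n : (2 <= k)%nat -> 0 < d -> 2 * d / INR k <= 1 ->
  qs k d (S n) <= qs k d n - qs k d n ^ 2 / 4.
Proof. intros Hk Hd Hdk. pose proof (qs_bounds k d n Hk (Rlt_le _ _ Hd)) as Hq.
  set (q := qs k d n) in *. cbn [qs]. fold q.
  assert (0 < INR k) by (apply lt_0_INR; lia).
  assert (Hx : d * (2 * q / INR k) = (2 * d / INR k) * q) by (field; lra).
  rewrite Hx.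
  assert (Hc : 0 <= 2 * d / INR k) by (unfold Rdiv; apply Rmult_le_pos; [lra|left; apply Rinv_0_lt_compat; lra]).
  assert (exp (- q) <= exp (- (2 * d / INR k * q))).
  { assert (- q <= - (2 * d / INR k * q)) by nra. destruct H0 as [H0|H0]. left; apply exp_increasing; auto. rewrite H0; lra. }
  assert (exp (- q) = exp (- q / 2) * exp (- q / 2)) by (rewrite <- exp_plus; f_equal; field).
  pose proof (exp_ineq1_le (- q / 2)).
  assert ((1 + - q / 2) * (1 + - q / 2) <= exp (- q / 2) * exp (- q / 2)) by (apply Rmult_le_compat; lra).
  simpl. nra. Qed.

Lemma qs_max k d eps : (2 <= k)%nat -> 0 < d -> 2 * d / INR k <= 1 -> 0 < eps ->
  forall n, qs k d n <= Rmax eps (1 - INR n * eps ^ 2 / 4).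
Proof. intros Hk Hd Hdk He n. induction n.
  - simpl. apply Rmax_Rle. right; lra.
  - pose proof (qs_step k d n Hk Hd Hdk). pose proof (qs_bounds k d n Hk (Rlt_le _ _ Hd)).
    apply Rmax_Rle. apply Rmax_Rle in IHn. rewrite S_INR.
    destruct (Rle_lt_dec (qs k d n) eps).
    + left. assert (0 <= qs k d n ^ 2 / 4) by (simpl; nra). lra.
    + right. destruct IHn as [IHn|IHn]; [lra|].
      assert (eps ^ 2 <= qs k d n ^ 2) by (apply pow_incr; lra). lra. Qed.

Lemma list_sum_in {A} (f : A -> nat) w l : In w l -> (f w <= list_sum (map f l))%nat.
Proof. induction l; simpl; intros H; [destruct H|]. destruct H as [H|H]; [subst; lia|]. specialize (IHl H); lia. Qed.

Lemma abs_split g u v : 0 <= g -> Rabs (g * u - g * v) <= g * Rmax 0 (u - v) + g * Rmax 0 (v - u).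
Proof. intros Hg. rewrite <- Rmult_minus_distr_l, Rabs_mult, (Rabs_pos_eq g Hg), <- Rmult_plus_distr_l.
  apply Rmult_le_compat_l; auto. unfold Rabs, Rmax. repeat destruct Rle_dec; destruct Rcase_abs; lra. Qed.

Theorem mainTheorem10 :
  forall (k : nat) (d : R),
    (2 <= k)%nat -> 0 < d -> 2 * d / INR k <= 1 ->
    forall eps : R, 0 < eps ->
    exists T : nat, forall t : nat, (1 <= t)%nat -> (T <= t)%nat ->
      forall x x' : nat, (1 <= x <= k)%nat -> (1 <= x' <= k)%nat ->
        dTV_le (P_law d k t x) (P_law d k t x') eps.
Proof.
  intros k d Hk Hd Hdk eps He.
  destruct (INR_unbounded (4 / eps ^ 2)) as [T HT].
  exists T. intros t _ HTt x x' Hx Hx'.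
  assert (Hq : qs k d t <= eps).
  { pose proof (qs_max k d eps Hk Hd Hdk He t). apply Rmax_Rle in H. destruct H; auto.
    assert (INR T <= INR t) by (apply le_INR; auto).
    assert (0 < eps ^ 2) by (apply pow_lt; auto).
    assert (4 / eps ^ 2 * eps ^ 2 = 4) by (field; lra).
    assert (1 < INR t * eps ^ 2 / 4) by nra. lra. }
  unfold dTV_le. intros l Hl.
  change (/ 2 * sumR (fun w => Rabs (P_law d k t x w - P_law d k t x' w)) l <= eps).
  set (g := fun w : tree * obs => gw_prob d t (fst w) * Rmax 0 (lik k t (fst w) x (snd w) - lik k t (fst w) x' (snd w))
           + gw_prob d t (fst w) * Rmax 0 (lik k t (fst w) x' (snd w) - lik k t (fst w) x (snd w))).
  assert (Hg0 : forall w, 0 <= g w).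
  { intros w. unfold g. pose proof (gw_nonneg d t (Rlt_le _ _ Hd) (fst w)).
    pose proof (Rmax_l 0 (lik k t (fst w) x (snd w) - lik k t (fst w) x' (snd w))).
    pose proof (Rmax_l 0 (lik k t (fst w) x' (snd w) - lik k t (fst w) x (snd w))). nra. }
  set (M := list_sum (map (fun w : tree * obs => tsize (fst w)) l)).
  apply Rle_trans with (/ 2 * sumR g (Ul k t M)).
  { apply Rmult_le_compat_l. lra.
    apply Rle_trans with (sumR g l).
    - apply sumR_le_in. intros w _. unfold P_law, g. apply abs_split. apply gw_nonneg; lra.
    - apply sumR_sub; auto. intros w Hw Hgw.
      assert (HM : (tsize (fst w) <= M)%nat) by (apply (list_sum_in (fun w : tree * obs => tsize (fst w))); auto).
      destruct w as [tau o]. simpl in HM.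
      destruct (Req_dec (lik k t tau x o) 0) as [E1|E1].
      + destruct (Req_dec (lik k t tau x' o) 0) as [E2|E2].
        * exfalso; apply Hgw; unfold g; simpl; rewrite E1, E2. replace (0 - 0) with 0 by ring.
          unfold Rmax; destruct Rle_dec; ring.
        * apply (mem_U k t M tau o x'); auto.
      + apply (mem_U k t M tau o x); auto. }
  unfold g. rewrite sumR_plus.
  pose proof (bad k d Hk (Rlt_le _ _ Hd) t M x x' Hx Hx').
  pose proof (bad k d Hk (Rlt_le _ _ Hd) t M x' x Hx' Hx). lra.
Qed.
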